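(* In the construction described in the context, for every $k\in\{1,\dots,t-1\}$ and every set $\mathcal{A}\subseteq\{1,\dots,t-1\}$ of indices with $|\mathcal{A}|=k$, there exist at least $k$ distinct edges of $F\cap T$ each of which crosses at least one of the complete cuts $C_G(X_i)$, $i\in\mathcal{A}$.
   Context: Setting: $G=(V,E)$ is a connected finite undirected graph (parallel edges allowed), $w:E\to\mathbb{R}_{\ge0}$ edge weights, $c:E\to\mathbb{R}_{>0}$ edge costs, $n=|V|$. For $S\subseteq V$, $C_G(S)=\{e\in E:|e\cap S|=1\}$ (complete cut; its edges cross it) and $C_G(S,W)=\{e\in C_G(S):w(e)<W\}$ (partial cut). $F\subseteq E$ is a set with $G'=G\setminus F=(V,E\setminus F)$ connected; $B=c(F)$ and $\Delta=\mathrm{MST}(G')-\mathrm{MST}(G)$ (MST weights w.r.t. $w$). Construction: let $T$ be a minimum spanning tree of $G$ and $T\cap F=\{e_1,\dots,e_{t-1}\}$, with $t\ge2$. Removing these edges splits $T$ into components with vertex sets $A_1,\dots,A_t$ (a partition of $V$). Let $G'_{cc}$ be the multigraph with vertex set $V_{cc}=\{A_1,\dots,A_t\}$ having, for every edge $\{u,v\}\in E\setminus F$ with $u\in A_i$, $v\in A_j$, an edge between $A_i$ and $A_j$ of weight $w(\{u,v\})$ (identified with the original edge). Let $T'_{cc}$ be a minimum spanning tree of $G'_{cc}$, with edges $e'_1,\dots,e'_{t-1}$ indexed so that $w(e'_1)\le\dots\le w(e'_{t-1})$ (ties broken arbitrarily). For each $i$, deleting $e'_i,e'_{i+1},\dots,e'_{t-1}$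 from $T'_{cc}$ leaves a forest in which $e'_i$ joins two components $L_i,R_i\subseteq V_{cc}$. Counters $k(A)=0$ for all $A\in V_{cc}$ initially, and $k(S)=\max_{A\in S}k(A)$. For $i=1,\dots,t-1$ in order: set $X_i=L_i$ if $k(L_i)\le k(R_i)$, else $X_i=R_i$; then increase $k(A)$ by $1$ for every $A\in X_i$. Identifying a set of vertices of $G'_{cc}$ with the union of the corresponding vertex sets in $V$, define $C_i=C_G(X_i,w(e'_i))$. *)

(* Defs.v *)
From mathcomp Require Import all_boot all_order all_algebra.
Set Implicit Arguments. Unset Strict Implicit. Unset Printing Implicit Defensive.
Import Order.TTheory GRing.Theory Num.Theory.

(* A finite multigraph is given by a vertex finType W, a vertex set Vs, an
   edge finType E with endpoint maps eu ev : E -> W; subgraphs are edge sets. *)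

Definition gadj (W E : finType) (eu ev : E -> W) (S : {set E}) : rel W :=
  fun x y => [exists e in S, ((eu e == x) && (ev e == y))
                          || ((eu e == y) && (ev e == x))].

Definition gconnected (W E : finType) (Vs : {set W}) (eu ev : E -> W)
  (S : {set E}) : Prop :=
  forall x y, x \in Vs -> y \in Vs -> connect (gadj eu ev S) x y.

Definition spanning_tree (W E : finType) (Vs : {set W}) (eu ev : E -> W)
  (Es S : {set E}) : Prop :=
  [/\ S \subset Es, gconnected Vs eu ev S &
      forall e, e \in S -> ~ gconnected Vs eu ev (S :\ e)].

Definition is_mst (R : numDomainType) (W E : finType) (Vs : {set W})
  (eu ev : E -> W) (Es : {set E}) (w : E -> R) (S : {set E}) : Prop :=
  spanning_tree Vs eu ev Es S /\
  forall S', spanning_tree Vs eu ev Es S' ->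
    (\sum_(e in S) w e <= \sum_(e in S') w e)%R.

Definition ccut (V E : finType) (eu ev : E -> V) (S : {set V}) : {set E} :=
  [set e | (eu e \in S) != (ev e \in S)].

Definition comp_of (V E : finType) (eu ev : E -> V) (S : {set E}) (x : V)
  : {set V} := [set y | connect (gadj eu ev S) x y].

Definition kmax (C : finType) (k : C -> nat) (S : {set C}) : nat :=
  \max_(A in S) k A.

Definition chooseX (C : finType) (k : C -> nat) (L R : nat -> {set C})
  (i : nat) : {set C} :=
  if kmax k (L i) <= kmax k (R i) then L i else R i.

Fixpoint counter (C : finType) (L R : nat -> {set C}) (n : nat) : C -> nat :=
  match n with
  | 0 => fun _ => 0
  | n'.+1 => let k := counter L R n' in
             fun A => k A + (A \in chooseX k L R n')
  end.

(* X_i (0-based index i) *)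
Definition Xset (C : finType) (L R : nat -> {set C}) (i : nat) : {set C} :=
  chooseX (counter L R i) L R i.

(* Main.v *)
Require Import Defs.
From mathcomp Require Import all_boot all_order all_algebra.
Set Implicit Arguments. Unset Strict Implicit. Unset Printing Implicit Defensive.
Import Order.TTheory GRing.Theory Num.Theory.

Lemma gadj_sym (W E : finType) (eu ev : E -> W) (S : {set E}) :
  symmetric (gadj eu ev S).
Proof.
move=> x y; rewrite /gadj; apply/existsP/existsP => -[e He]; exists e;
  by move: He; rewrite orbC.
Qed.

Lemma connect_const (W E : finType) (eu ev : E -> W) (S : {set E}) (K : Type)
  (f : W -> K) :
  (forall e, e \in S -> f (eu e) = f (ev e)) ->
  forall x y, connect (gadj eu ev S) x y -> f x = f y.
Proof.
move=> Hf x y /connectP[p Hp ->]; elim: p x Hp => //= z p IH x /andP[Hxz Hp].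
rewrite -IH //; case/existsP: Hxz => e /andP[eS /orP[]/andP[/eqP<- /eqP<-]];
  by rewrite Hf.
Qed.

Local Open Scope ring_scope.

Lemma key (E V : finType) (eu ev : E -> V) (T D : {set E}) (n : nat)
  (A : {set 'I_n}) (U : 'I_n -> {set V}) (a b : 'I_n -> V) :
  gconnected [set: V] eu ev T ->
  (forall e, e \in T -> e \notin D -> forall i, i \in A ->
     (eu e \in U i) = (ev e \in U i)) ->
  (forall i, i \in A -> (a i \in U i) != (b i \in U i)) ->
  (forall i j, i \in A -> j \in A -> (i < j)%N -> (a i \in U j) = (b i \in U j)) ->
  (#|A| <= #|D|)%N.
Proof.
move=> Tcon HT Hab Hlt.
pose cr (i : 'I_n) (x : V) : rat := (x \in U i)%:R.
pose Mx : 'M[rat]_(#|A|, #|D|) :=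
  \matrix_(r, c) (cr (enum_val r) (eu (enum_val c)) - cr (enum_val r) (ev (enum_val c))).
have : row_free Mx.
  apply: inj_row_free => v Hv; apply/rowP => r0; rewrite mxE.
  apply/eqP; apply/negPn/negP => Hr0.
  pose P := fun r : 'I_#|A| => v 0 r != 0.
  case: (@arg_minnP _ r0 P (fun r => val (enum_val r)) Hr0) => rm Hrm Hmin.
  pose chi (x : V) := \sum_r v 0 r * cr (enum_val r) x.
  have Hc : forall e, e \in T -> chi (eu e) = chi (ev e).
    move=> e eT; apply/eqP; rewrite -subr_eq0; apply/eqP.
    rewrite /chi -sumrB.
    case eD: (e \in D).
      have := congr1 (fun M : 'rV[rat]_#|D| => M 0 (enum_rank_in eD e)) Hv.
      rewrite !mxE => H; rewrite -[X in _ = X]H.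
      by apply: eq_bigr => r _; rewrite mxE (enum_rankK_in eD eD) mulrBr.
    apply: big1 => r _; rewrite /cr (HT e eT (negbT eD)) ?enum_valP //.
    by rewrite subrr.
  have := @connect_const _ _ eu ev T _ chi Hc (a (enum_val rm)) (b (enum_val rm)).
  rewrite Tcon ?inE // => /(_ isT) /eqP; rewrite -subr_eq0 /chi -sumrB.
  rewrite (bigD1 rm) //= big1 ?addr0.
    rewrite -mulrBr mulf_eq0 (negbTE Hrm) /= /cr.
    by move: (Hab _ (enum_valP rm)); case: (_ \in _); case: (_ \in _).
  move=> r Hr; case Pr: (P r); last first.
    by move/negbFE: Pr => /eqP ->; rewrite !mul0r subrr.
  have Hle := Hmin r Pr.
  have Hne : enum_val rm != enum_val r by apply: contra Hr => /eqP/enum_val_inj ->.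
  have Hlt' : (enum_val rm < enum_val r)%N by rewrite ltn_neqAle Hle andbT; apply: contra Hne => /eqP/val_inj ->.
  by rewrite /cr (Hlt _ _ (enum_valP rm) (enum_valP r) Hlt') subrr.
rewrite /row_free => /eqP <-; exact: rank_leq_col.
Qed.

Lemma connect_img (V W E : finType) (f : V -> W) (eu ev : E -> V) (S : {set E}) x B :
  connect (gadj (f \o eu) (f \o ev) S) (f x) B -> exists y, B = f y.
Proof.
case/connectP=> p Hp EB; subst B; elim: p x Hp => [|z p IH] x /=; first by exists x.
case/andP=> /existsP[e /andP[_ /orP[/andP[_ /eqP Hz]|Hz]]] Hp /=.
- by subst z; apply: (IH (ev e)).
- by case/andP: Hz => /eqP Hz _; subst z; apply: (IH (eu e)).
Qed.

Lemma connect_mono (W E : finType) (eu ev : E -> W) (S S' : {set E}) :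
  S \subset S' -> forall x y, connect (gadj eu ev S) x y -> connect (gadj eu ev S') x y.
Proof.
move=> sS x y; apply: connect_sub => {}x {}y /existsP[e /andP[eS H]].
by apply: connect1; apply/existsP; exists e; rewrite (subsetP sS).
Qed.

Lemma comp_eq (V E : finType) (eu ev : E -> V) (S : {set E}) x y :
  x \in comp_of eu ev S y -> comp_of eu ev S x = comp_of eu ev S y.
Proof.
rewrite inE => Hyx; have sym := sym_connect_sym (@gadj_sym _ _ eu ev S).
apply/setP => z; rewrite !inE; apply/idP/idP => H.
- exact: connect_trans Hyx H.
- by apply: connect_trans H; rewrite sym.
Qed.

Lemma memU (V E : finType) (eu ev : E -> V) (S : {set E}) (X : {set {set V}}) x :
  (forall B, B \in X -> exists y, B = comp_of eu ev S y) ->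
  (x \in \bigcup_(B in X) B) = (comp_of eu ev S x \in X).
Proof.
move=> HX; apply/bigcupP/idP => [[B BX xB]|Hx].
- by have [y Bf] := HX B BX; move: xB BX; rewrite Bf => /comp_eq ->.
- by exists (comp_of eu ev S x) => //; rewrite inE connect0.
Qed.

Lemma Xset_cases (C : finType) (L R : nat -> {set C}) i :
  Xset L R i = L i \/ Xset L R i = R i.
Proof. by rewrite /Xset /chooseX; case: ifP; [left|right]. Qed.

Theorem mainTheorem12
  (R : realFieldType) (V E : finType) (eu ev : E -> V) (w : E -> R)
  (F T Tcc : {set E}) (t : nat)
  (ep : 'I_t.-1 -> E) (L Rt : nat -> {set {set V}}) :
  (forall e, 0 <= w e)%R ->
  gconnected [set: V] eu ev [set: E] ->
  gconnected [set: V] eu ev (~: F) ->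
  is_mst [set: V] eu ev [set: E] w T ->
  (2 <= t)%N ->
  #|T :&: F| = t.-1 ->
  (* G'_cc: vertices = components of (V, T \ F), edges = E \ F *)
  let cc := comp_of eu ev (T :\: F) in
  let Vcc := [set cc x | x : V] in
  is_mst Vcc (cc \o eu) (cc \o ev) (~: F) w Tcc ->
  (* e'_1, ..., e'_{t-1}: an enumeration of T'_cc by nondecreasing weight *)
  injective ep ->
  [set ep i | i : 'I_t.-1] = Tcc ->
  (forall i j : 'I_t.-1, (i <= j)%N -> (w (ep i) <= w (ep j))%R) ->
  (* L_i, R_i: the two components, in the forest with edges e'_1..e'_{i-1},
     joined by e'_i *)
  (forall i : 'I_t.-1,
     let Fi := [set ep j | j : 'I_t.-1 & (j < i)%N] in
     let Ku := [set B | connect (gadj (cc \o eu) (cc \o ev) Fi) (cc (eu (ep i))) B] in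
     let Kv := [set B | connect (gadj (cc \o eu) (cc \o ev) Fi) (cc (ev (ep i))) B] in
     (L i = Ku /\ Rt i = Kv) \/ (L i = Kv /\ Rt i = Ku)) ->
  forall k : nat, (1 <= k <= t.-1)%N ->
  forall A : {set 'I_t.-1}, #|A| = k ->
  (k <= #|[set e in F :&: T |
            [exists i in A, e \in ccut eu ev (\bigcup_(B in Xset L Rt i) B)]]|)%N.
Proof.
move=> _ _ _ [[_ Tcon _] _] _ _ cc Vcc [[_ Tccon Tmin] _] ep_inj Hep _ HLR k _ A <-.
set G := fun i : 'I_t.-1 => gadj (cc \o eu) (cc \o ev) [set ep j | j : 'I_t.-1 & (j < i)%N].
have Xform : forall i : 'I_t.-1, exists s,
    Xset L Rt i = [set B | connect (G i) (cc s) B].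
  move=> i; have [HX|HX] := Xset_cases L Rt i; rewrite HX;
    case: (HLR i) => -[HL HR]; rewrite ?HL ?HR; by [exists (eu (ep i)) | exists (ev (ep i))].
have Xcc : forall i : 'I_t.-1, forall B, B \in Xset L Rt i -> exists y, B = cc y.
  move=> i B; have [s ->] := Xform i; rewrite inE; exact: connect_img.
have mU : forall (i : 'I_t.-1) x,
    (x \in \bigcup_(B in Xset L Rt i) B) = (cc x \in Xset L Rt i).
  move=> i x; exact: memU (Xcc i).
have acyc : forall i : 'I_t.-1, ~~ connect (G i) (cc (eu (ep i))) (cc (ev (ep i))).
  move=> i; apply/negP => Hc.
  have epT : ep i \in Tcc by rewrite -Hep imset_f.
  apply: (Tmin _ epT) => x y xV yV.
  have sub : [set ep j | j : 'I_t.-1 & (j < i)%N] \subset Tcc :\ ep i.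
    apply/subsetP => e /imsetP[j]; rewrite inE => ji ->.
    rewrite !inE -Hep imset_f // andbT.
    by apply: contraTneq ji => /ep_inj ->; rewrite ltnn.
  have Hc' := connect_mono sub Hc.
  move: (Tccon x y xV yV); apply: connect_sub => u v /existsP[e /andP[eT He]].
  case: (eqVneq e (ep i)) => [Ee|Ne].
    subst e; case/orP: He => /andP[/eqP <- /eqP <-] //=.
    by rewrite (sym_connect_sym (@gadj_sym _ _ _ _ _)).
  by apply: connect1; apply/existsP; exists e; rewrite !inE Ne eT.
have symG : forall i, connect_sym (G i) by move=> i; apply: sym_connect_sym; apply: gadj_sym.
apply: (@key E V eu ev T _ _ A (fun i => \bigcup_(B in Xset L Rt i) B)
          (fun i => eu (ep i)) (fun i => ev (ep i)) Tcon).
- move=> e eT eD i iA.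
  case eF: (e \in F).
    apply/eqP; apply: contraNT eD => Hn; rewrite inE inE eF eT /=.
    by apply/existsP; exists i; rewrite iA inE.
  rewrite !mU; suff -> : cc (eu e) = cc (ev e) by [].
  apply: comp_eq; rewrite inE; apply: connect1; apply/existsP; exists e.
  by rewrite !inE eF eT !eqxx orbT.
- move=> i _; rewrite !mU.
  have Hn := acyc i; have Hn' : ~~ connect (G i) (cc (ev (ep i))) (cc (eu (ep i))).
    by rewrite symG.
  have [HX|HX] := Xset_cases L Rt i; rewrite HX;
    case: (HLR i) => -[HL HR]; rewrite ?HL ?HR; rewrite !inE connect0 //=; 
    by [rewrite (negbTE Hn) | rewrite (negbTE Hn')].
- move=> i j _ _ ij; rewrite !mU.
  have [s ->] := Xform j; rewrite !inE.
  have Hadj : G j (cc (eu (ep i))) (cc (ev (ep i))).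
    by apply/existsP; exists (ep i); rewrite imset_f ?inE ?eqxx.
  apply/idP/idP => H.
  + exact: connect_trans H (connect1 Hadj).
  + apply: connect_trans H (connect1 _); rewrite /G gadj_sym; exact: Hadj.
Qed.
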